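(* Let $d$ and $k$ be integers with $1\le k\le d-1$, let $\Lambda\subseteq\mathbb{R}^d$ be a $d$-dimensional lattice with $\lambda_d(\Lambda,B^d)\le1$, and write $\lambda_i=\lambda_i(\Lambda,B^d)$ for $i\in\{1,\dots,d\}$. Let \[\alpha=\min_{d-k+1\le i\le d}(\lambda_{d-i+1}\cdots\lambda_d)^{-1/(i-1)},\] and let $q\in\{d-k+1,\dots,d\}$ be an integer with $\alpha=(\lambda_{d-q+1}\cdots\lambda_d)^{-1/(q-1)}$. If $q\ge d-k+2$, then: (i) $1/\lambda_i\le\alpha$ for every $i\in\{d-q+1,\dots,d\}$; (ii) $(\lambda_{d-i+2}\cdots\lambda_d)^{(q-i+1)/(i-2)}\le\lambda_{d-q+1}\cdots\lambda_{d-i+1}$ for every $i\in\{3,\dots,d-k+2\}$.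
   Context: $B^d$ is the closed unit Euclidean ball in $\mathbb{R}^d$ centered at the origin. A $d$-dimensional lattice is the set of all integer linear combinations of $d$ linearly independent vectors of $\mathbb{R}^d$. For a lattice $\Lambda$ and a compact convex body $K$ symmetric about the origin, the $i$th successive minimum is $\lambda_i(\Lambda,K)=\inf\{\lambda\in\mathbb{R}:\dim(\Lambda\cap(\lambda K))\ge i\}$; one has $\lambda_1\le\cdots\le\lambda_d$. *)

(* Defs.v *)
From HB Require Import structures.
From mathcomp Require Import all_boot all_order all_algebra.
From mathcomp Require Import all_classical all_reals all_analysis.
Set Implicit Arguments. Unset Strict Implicit. Unset Printing Implicit Defensive.
Import Order.TTheory GRing.Theory Num.Theory.
Local Open Scope classical_set_scope.
Local Open Scope ring_scope.

Definition enorm (R : realType) (d : nat) (v : 'rV[R]_d) : R :=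
  Num.sqrt (\sum_(j < d) (v ord0 j) ^+ 2).

Definition lattice_of (R : realType) (d : nat) (B : 'M[R]_d) : set 'rV[R]_d :=
  [set v | exists z : 'I_d -> int, v = \sum_(i < d) (z i)%:~R *: row i B].

(* i-th successive minimum of L w.r.t. the Euclidean unit ball B^d:
   inf { l > 0 : L ∩ l B^d contains i linearly independent vectors },
   i.e. dim(span(L ∩ l B^d)) >= i.  v ∈ l B^d  iff  |v| <= l. *)
Definition succ_min (R : realType) (d : nat) (L : set 'rV[R]_d) (i : nat) : R :=
  inf [set l : R | 0 < l /\
        exists M : 'M[R]_(i, d), row_free M /\
          forall r : 'I_i, L (row r M) /\ enorm (row r M) <= l].

(* Main.v *)
Require Import Defs.
From HB Require Import structures.
From mathcomp Require Import all_boot all_order all_algebra.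
From mathcomp Require Import all_classical all_reals all_analysis.
From mathcomp Require Import zify ring lra.
Import Order.TTheory GRing.Theory Num.Theory.
Local Open Scope ring_scope.

Section Aux.
Variable R : realType.

Lemma ln_prod_seq (s : seq nat) (F : nat -> R) :
  {in s, forall j, 0 < F j} ->
  0 < \prod_(j <- s) F j /\ ln (\prod_(j <- s) F j) = \sum_(j <- s) ln (F j).
Proof.
elim: s => [|x s IH] H; first by rewrite !big_nil ln1 ltr01.
have [p1 p2] : 0 < \prod_(j <- s) F j /\ ln (\prod_(j <- s) F j) = \sum_(j <- s) ln (F j).
  by apply: IH => j js; apply: H; rewrite inE js orbT.
have fx : 0 < F x by apply: H; rewrite inE eqxx.
rewrite !big_cons lnM ?posrE // p2; split => //; exact: mulr_gt0.
Qed.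

Lemma cross (a b X Y : R) : 0 < a -> 0 < b ->
  - a^-1 * X <= - b^-1 * Y -> Y * a <= X * b.
Proof.
move=> a0 b0; rewrite !mulNr lerN2 => h.
have := ler_wpM2r (x := a * b) _ h.
have -> : b^-1 * Y * (a * b) = Y * a by field; rewrite gt_eqF.
have -> : a^-1 * X * (a * b) = X * b by field; rewrite gt_eqF.
apply; rewrite mulr_ge0 // ltW //.
Qed.
End Aux.

Ltac nlia :=
  repeat match goal with
  | H : is_true (leq _ _) |- _ => revert H
  | H : is_true (andb (leq _ _) (leq _ _)) |- _ => revert H
  | H : @eq nat _ _ |- _ => revert H
  end;
  repeat match goal with H : _ |- _ => clear H end;
  lia.

Lemma comm3 (R : realType) (a g r : R) : a * g * r <= r * g * a.
Proof. by rewrite mulrAC [X in _ <= X]mulrAC (mulrC a). Qed.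

Lemma core (R : realType) (d k q : nat) (lam : nat -> R) :
  (1 <= k)%N -> (k <= d - 1)%N ->
  (forall j, (1 <= j <= d)%N -> 0 < lam j) ->
  (forall a b, (1 <= a)%N -> (a <= b)%N -> (b <= d)%N -> lam a <= lam b) ->
  let f := fun i : nat =>
    (\prod_(d.+1 - i <= j < d.+1) lam j) `^ (- (i.-1%:R)^-1) in
  (d.+1 - k <= q <= d)%N ->
  (forall i : nat, (d.+1 - k <= i <= d)%N -> f q <= f i) ->
  let alpha := f q in
  (d.+2 - k <= q)%N ->
  (forall i : nat, (d.+1 - q <= i <= d)%N -> (lam i)^-1 <= alpha) /\
  (forall i : nat, (3 <= i <= d.+2 - k)%N ->
     (\prod_(d.+2 - i <= j < d.+1) lam j) `^ ((q.+1 - i)%:R / (i - 2)%:R)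
     <= \prod_(d.+1 - q <= j < d.+2 - i) lam j).
Proof.
move=> k1 kd lpos lmono f /andP[qlo qhi] hmin alpha q2.
pose L j := ln (lam j).
pose S a b := \sum_(a <= j < b) L j.
have lnP : forall a b, (1 <= a)%N -> (b <= d.+1)%N ->
    0 < \prod_(a <= j < b) lam j /\ ln (\prod_(a <= j < b) lam j) = S a b.
  move=> a b a1 bd; apply: ln_prod_seq => j; rewrite mem_index_iota => /andP[h1 h2].
  apply: lpos; nlia.
have lnf : forall i, (1 <= i <= d)%N ->
    0 < f i /\ ln (f i) = - (i.-1%:R)^-1 * S (d.+1 - i)%N d.+1.
  move=> i hi; have [h1 h2] := lnP (d.+1 - i)%N d.+1 ltac:(nlia) (leqnn _).
  by rewrite /f ln_powR h2; split => //; apply: powR_gt0.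
have hmin' : forall i, (d.+1 - k <= i <= d)%N ->
    - (q.-1%:R)^-1 * S (d.+1 - q)%N d.+1 <= - (i.-1%:R)^-1 * S (d.+1 - i)%N d.+1.
  move=> i hi.
  have [fq1 fq2] := lnf q ltac:(nlia).
  have [fi1 fi2] := lnf i ltac:(nlia).
  by rewrite -fq2 -fi2 ler_ln ?posrE // hmin.
set p := (d.+1 - q)%N.
set g := (q.-1%:R)^-1 * S p d.+1.
have qa : 0 < (q.-1%:R : R) by rewrite ltr0n; nlia.
have Sg : S p d.+1 = q.-1%:R * g by rewrite /g mulrA mulfV ?gt_eqF // mul1r.
have hp : g <= L p.
  have h := hmin' q.-1 ltac:(nlia).
  have e : (d.+1 - q.-1 = p.+1)%N by rewrite /p; nlia.
  rewrite e in h.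
  have qb : 0 < ((q.-1).-1%:R : R) by rewrite ltr0n; nlia.
  have := @cross R _ _ _ _ qa qb h.
  have sp : S p d.+1 = L p + S p.+1 d.+1 by rewrite /S big_ltn //; nlia.
  have ab : (q.-1%:R : R) = q.-2%:R + 1 by rewrite natr1; congr (_%:R); nlia.
  rewrite -/p sp => hc.
  move: Sg; rewrite sp ab => Sg'.
  move: hc; rewrite ab => hc.
  nra.
have hall : forall j, (p <= j <= d)%N -> g <= L j.
  move=> j hj; apply: (le_trans hp); rewrite /L ler_ln ?posrE; last 2 first.
  - apply: lpos; nlia.
  - apply: lpos; nlia.
  apply: lmono; nlia.
have sumge : forall a b, (p <= a)%N -> (a <= b)%N -> (b <= d.+1)%N -> (b - a)%:R * g <= S a b.
  move=> a b pa ab bd.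
  rewrite mulrC mulr_natr -sumr_const_nat /S.
  apply: ler_sum_nat => j hj; apply: hall; nlia.
have [fq1 fq2] := lnf q ltac:(nlia).
have lnal : ln alpha = - g by rewrite fq2 /g mulNr.
split.
- move=> i hi.
  have li : 0 < lam i by apply: lpos; nlia.
  rewrite -ler_ln ?posrE ?invr_gt0 // lnV ?posrE // lnal lerN2.
  apply: hall; nlia.
- move=> i hi.
  move def_t: (d.+2 - i)%N => t.
  have ep : p = (d.+1 - q)%N by [].
  clearbody p g alpha f.
  have [pt1 pt2] := lnP t d.+1 ltac:(nlia) (leqnn _).
  have [pp1 pp2] := lnP p t ltac:(nlia) ltac:(nlia).
  rewrite -ler_ln ?posrE ?powR_gt0 // ln_powR pt2 pp2.
  have hr := hmin' (d.+1 - k)%N ltac:(nlia).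
  have e : (d.+1 - (d.+1 - k) = k)%N by nlia.
  rewrite e -ep in hr.
  have rb : 0 < ((d.+1 - k).-1%:R : R) by rewrite ltr0n; nlia.
  have := @cross R _ _ _ _ qa rb hr; rewrite Sg => hc.
  have hc' : S k d.+1 <= (d.+1 - k).-1%:R * g.
    rewrite -(ler_pM2r qa); apply: (le_trans hc).
    exact: comm3.
  have sk : S k d.+1 = S k t + S t d.+1 by rewrite /S (big_cat_nat _ (n := t)) //; nlia.
  have g1 := sumge k t ltac:(nlia) ltac:(nlia) ltac:(nlia).
  have g2 := sumge p t ltac:(nlia) ltac:(nlia) ltac:(nlia).
  have e1 : ((d.+1 - k).-1%:R : R) = (t - k)%:R + (i - 2)%:R by rewrite -natrD; congr (_%:R); nlia.
  have e2 : ((t - p)%:R : R) = (q.+1 - i)%:R by congr (_%:R); nlia.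
  have St : S t d.+1 <= (i - 2)%:R * g.
    move: hc'; rewrite sk e1 mulrDl => hc'; move: g1; lra.
  have i2 : 0 < ((i - 2)%:R : R) by rewrite ltr0n; nlia.
  have c0 : 0 <= ((q.+1 - i)%:R / (i - 2)%:R : R) by rewrite divr_ge0.
  apply: (le_trans (ler_wpM2l c0 St)).
  by rewrite mulrA divfK ?gt_eqF // -e2.
Qed.

Section Lat.
Local Open Scope classical_set_scope.
Local Open Scope ring_scope.
Variables (R : realType) (d : nat) (B : 'M[R]_d).

Definition Sset (i : nat) := [set l : R | 0 < l /\
        exists M : 'M[R]_(i, d), row_free M /\
          forall r : 'I_i, lattice_of B (row r M) /\ enorm (row r M) <= l].

Lemma succ_minE i : succ_min (lattice_of B) i = inf (Sset i).
Proof. by []. Qed.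

Lemma enorm_ge0 n (v : 'rV[R]_n) : 0 <= enorm v.
Proof. exact: sqrtr_ge0. Qed.

Lemma enorm_coord n (v : 'rV[R]_n) j : `|v 0 j| <= enorm v.
Proof.
rewrite /enorm -sqrtr_sqr; apply: ler_wsqrtr.
rewrite (bigD1 j) //= lerDl; apply: sumr_ge0 => i _; exact: sqr_ge0.
Qed.

Lemma Sset_sub i j l : (i <= j)%N -> Sset j l -> Sset i l.
Proof.
move=> ij [l0 [M [fM HM]]]; split => //.
exists (rowsub (widen_ord ij) M); split; last first.
  by move=> r; rewrite row_rowsub; apply: HM.
apply: inj_row_free => v.
rewrite rowsubE mulmxA => /eqP; rewrite mulmx_free_eq0 // => /eqP h.
apply/rowP => r; rewrite mxE.
have := congr1 (fun w : 'rV_j => w 0 (widen_ord ij r)) h.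
rewrite !mxE (bigD1 r) //= big1.
  by rewrite !mxE eqxx mulr1 addr0.
move=> s sr; rewrite !mxE.
have -> : (widen_ord ij s == widen_ord ij r) = false.
  apply/negbTE; apply: contra sr => /eqP e; apply/eqP; apply: val_inj.
  by move: (congr1 val e).
by rewrite mulr0.
Qed.

Lemma row_lattice (r : 'I_d) : lattice_of B (row r B).
Proof.
exists (fun i => (i == r)%:Z); rewrite (bigD1 r) //= big1.
  by rewrite eqxx scale1r addr0.
by move=> i /negbTE ->; rewrite scale0r.
Qed.

Hypothesis Bu : B \in unitmx.

Lemma Sset_d_ne : Sset d !=set0.
Proof.
exists (1 + \sum_r enorm (row r B)); split.
  by apply: ltr_pwDl => //; apply: sumr_ge0 => r _; exact: enorm_ge0.
exists B; split; first by rewrite row_free_unit.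
move=> r; split; first exact: row_lattice.
rewrite (bigD1 r) //= addrCA lerDl; apply: addr_ge0 => //.
by apply: sumr_ge0 => s _; exact: enorm_ge0.
Qed.

Lemma Sset_ne i : (i <= d)%N -> Sset i !=set0.
Proof.
move=> id; have [l hl] := Sset_d_ne; exists l; exact: Sset_sub hl.
Qed.

Definition cst : R :=
  (1 + \sum_i \sum_j `|invmx B j i|)^-1.

Lemma cst_gt0 : 0 < cst.
Proof.
rewrite invr_gt0; apply: ltr_pwDl => //; do 2 (apply: sumr_ge0 => ? _) => //.
Qed.

Lemma discrete v : lattice_of B v -> v != 0 -> cst <= enorm v.
Proof.
move=> [z ->] v0.
set zr := \row_i ((z i)%:~R : R).
have ev : \sum_(i < d) (z i)%:~R *: row i B = zr *m B.
  by rewrite mulmx_sum_row; apply: eq_bigr => i _; rewrite mxE.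
rewrite ev in v0 *.
set v' := zr *m B in v0 *.
have zv : zr = v' *m invmx B by rewrite /v' mulmxK.
have [i zi] : exists i, zr 0 i != 0.
  apply/existsP; apply: contraR v0 => /existsPn h.
  rewrite /v'; have -> : zr = 0 by apply/rowP => j; have := h j; rewrite negbK => /eqP ->; rewrite mxE.
  by rewrite mul0mx.
have ge1 : 1 <= `|zr 0 i|.
  move: zi; rewrite mxE -intr_norm ler1z intr_eq0 => zi.
  by rewrite -normr_gt0 in zi.
have T0 : 0 < 1 + \sum_i \sum_j `|invmx B j i| by apply: ltr_pwDl => //; do 2 (apply: sumr_ge0 => ? _) => //.
rewrite /cst -[X in X <= _]mul1r ler_pdivrMr //.
apply: (le_trans ge1).
rewrite zv mxE.
apply: (le_trans (ler_norm_sum _ _ _)).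
apply: (@le_trans _ _ (\sum_j enorm v' * `|invmx B j i|)).
  apply: ler_sum => j _; rewrite normrM; apply: ler_wpM2r => //; exact: enorm_coord.
rewrite -mulr_sumr; apply: ler_wpM2l; first exact: enorm_ge0.
rewrite [X in _ <= 1 + X](bigD1 i) //= addrCA lerDl; apply: addr_ge0 => //.
by apply: sumr_ge0 => ? _; apply: sumr_ge0 => ? _.
Qed.

Lemma lam_pos i : (1 <= i <= d)%N -> 0 < succ_min (lattice_of B) i.
Proof.
move=> /andP[i1 id]; rewrite succ_minE.
apply: (lt_le_trans cst_gt0); apply: lb_le_inf; first exact: Sset_ne.
move=> l [l0 [M [fM HM]]].
have [Lr Nr] := HM (Ordinal i1).
suff nz : row (Ordinal i1) M != 0. exact: le_trans (discrete _ Lr nz) Nr.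
rewrite rowE; apply/negP => /eqP h.
have e : 'e_(Ordinal i1) = 0 :> 'rV[R]_i.
  apply: (row_free_inj fM); rewrite mul0mx; exact: h.
have /rowP/(_ (Ordinal i1)) := e.
by rewrite !mxE !eqxx /= => /eqP; rewrite oner_eq0.
Qed.

Lemma lam_mono a b : (1 <= a)%N -> (a <= b)%N -> (b <= d)%N ->
  succ_min (lattice_of B) a <= succ_min (lattice_of B) b.
Proof.
move=> a1 ab bd; rewrite !succ_minE.
apply: lb_le_inf; first exact: Sset_ne.
move=> l hl; apply: ge_inf; last exact: Sset_sub hl.
by exists 0 => y [y0 _]; exact: ltW.
Qed.
End Lat.

Theorem lemma2 (R : realType) (d k : nat) (B : 'M[R]_d) (q : nat) :
  (1 <= k)%N -> (k <= d - 1)%N ->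
  B \in unitmx ->
  succ_min (lattice_of B) d <= 1 ->
  let lam := succ_min (lattice_of B) in
  let f := fun i : nat =>
    (\prod_(d.+1 - i <= j < d.+1) lam j) `^ (- (i.-1%:R)^-1) in
  (d.+1 - k <= q <= d)%N ->
  (* alpha = min_{d-k+1 <= i <= d} f i, and alpha = f q *)
  (forall i : nat, (d.+1 - k <= i <= d)%N -> f q <= f i) ->
  let alpha := f q in
  (d.+2 - k <= q)%N ->
  (forall i : nat, (d.+1 - q <= i <= d)%N -> (lam i)^-1 <= alpha) /\
  (forall i : nat, (3 <= i <= d.+2 - k)%N ->
     (\prod_(d.+2 - i <= j < d.+1) lam j) `^ ((q.+1 - i)%:R / (i - 2)%:R)
     <= \prod_(d.+1 - q <= j < d.+2 - i) lam j).
Proof.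
move=> k1 kd Bu _.
apply: core => //.
- by move=> j hj; apply: lam_pos.
- by move=> a b h1 h2 h3; apply: lam_mono.
Qed.
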